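(* Let $G$ be a non-trivial finite group and let $P$ be a finite $G$-poset. Then $$\chi\left(\widetilde{C}_P\right)\leq \dim(P)+1.$$
   Context: A $G$-poset is a partially ordered set $(P,\preceq)$ together with an action of the group $G$ on $P$ that preserves the order: $x\preceq y \Rightarrow g\cdot x\preceq g\cdot y$. For $x\in P$ let $[x]=\{g\cdot x: g\in G\}$ be its orbit. The strong compatibility graph $\widetilde{C}_P$ is the simple graph with vertex set $P$ in which two elements $x,y\in P$ are adjacent if there is $g\in G\setminus\{e\}$ ($e$ the identity) such that $x$ and $g\cdot y$ are comparable in $P$, and $y\notin[x]$. The dimension $\dim(P)$ is the dimension of the order complex $\Delta(P)$ (the simplicial complex whose simplices are the chains of $P$), i.e. the maximum number of elements in a chain of $P$ minus one. $\chi$ denotes the chromatic number. *)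

(* Defs.v *)
From mathcomp Require Import all_boot all_order all_fingroup.
Set Implicit Arguments. Unset Strict Implicit. Unset Printing Implicit Defensive.
Import Order.Theory.
Local Open Scope order_scope.

(* A G-poset: finite poset T (finPOrderType) with a (right, mathcomp-style)
   action to of the finite group gT, g . x := to x g, preserving the order. *)
Definition order_preserving (d : Order.disp_t) (T : finPOrderType d)
  (gT : finGroupType) (to : {action gT &-> T}) : Prop :=
  forall (x y : T) (g : gT), x <= y -> to x g <= to y g.

Definition scg_adj (d : Order.disp_t) (T : finPOrderType d)
  (gT : finGroupType) (to : {action gT &-> T}) (x y : T) : bool :=
  [exists g : gT, (g != 1%g) && (x >=< to y g)]
  && (y \notin orbit to [set: gT] x).

(* Chains of P, and (dim P + 1) = maximal number of elements of a chain. *)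
Definition is_chain (d : Order.disp_t) (T : finPOrderType d) (C : {set T}) : bool :=
  [forall x in C, forall y in C, x >=< y].

Definition max_chain_size (d : Order.disp_t) (T : finPOrderType d) : nat :=
  \max_(C : {set T} | is_chain C) #|C|.

Definition proper_colouring (d : Order.disp_t) (T : finPOrderType d)
  (gT : finGroupType) (to : {action gT &-> T}) (k : nat) (f : T -> 'I_k) : Prop :=
  forall x y : T, scg_adj to x y -> f x != f y.

(* Main.v *)
Require Import Defs.
From mathcomp Require Import all_boot all_order all_fingroup.
Set Implicit Arguments. Unset Strict Implicit. Unset Printing Implicit Defensive.
Import Order.Theory.

Section H.
Variables (gT : finGroupType) (d : Order.disp_t) (T : finPOrderType d)
  (to : {action gT &-> T}).
Hypothesis op : order_preserving to.

Definition cbelow (x : T) (C : {set T}) : bool :=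
  [&& is_chain C, x \in C & [forall z in C, (z <= x)%O]].

Definition Ht (x : T) : nat := \max_(C | cbelow x C) #|C|.

Lemma cbelow1 x : cbelow x [set x].
Proof.
rewrite /cbelow set11 /=; apply/andP; split.
  by apply/forall_inP => a /set1P -> ; apply/forall_inP => b /set1P ->; exact: comparablexx.
by apply/forall_inP => a /set1P ->.
Qed.

Lemma Ht_ge1 x : 0 < Ht x.
Proof. by apply: leq_trans (leq_bigmax_cond _ (cbelow1 x)); rewrite cards1. Qed.

Lemma Ht_lt x : (Ht x).-1 < max_chain_size T.
Proof.
rewrite prednK ?Ht_ge1 //; apply/bigmax_leqP => C /and3P [hC _ _].
exact: leq_bigmax_cond.
Qed.

Lemma Ht_witness x : exists C, cbelow x C /\ Ht x = #|C|.
Proof.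
have h : 0 < #|[pred C | cbelow x C]|.
  by apply/card_gt0P; exists [set x]; rewrite inE cbelow1.
have [C HC E] := eq_bigmax_cond (fun C : {set T} => #|C|) h.
by exists C; split => //; move: HC; rewrite inE.
Qed.

Lemma Ht_act_le x g : Ht x <= Ht (to x g).
Proof.
have [C [/and3P [hC xC bC] ->]] := Ht_witness x.
have -> : #|C| = #|[set to z g | z in C]|.
  by rewrite card_imset //; exact: act_inj.
apply: leq_bigmax_cond; apply/and3P; split.
- apply/forall_inP => a /imsetP [a' a'C ->]; apply/forall_inP => b /imsetP [b' b'C ->].
  have := forall_inP (forall_inP hC _ a'C) _ b'C.
  by case/orP => h; apply/orP; [left|right]; apply: op.
- by apply/imsetP; exists x.
- apply/forall_inP => a /imsetP [a' a'C ->]; apply: op; exact: (forall_inP bC).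
Qed.

Lemma Ht_act x g : Ht (to x g) = Ht x.
Proof.
apply/eqP; rewrite eqn_leq Ht_act_le andbT.
by have := Ht_act_le (to x g) g^-1; rewrite actK.
Qed.

Lemma Ht_lt_mono x y : (x < y)%O -> Ht x < Ht y.
Proof.
move=> lxy.
have [C [/and3P [hC xC bC] ->]] := Ht_witness x.
have yC : y \notin C.
  apply/negP => yC; have := forall_inP bC _ yC.
  by move/(lt_le_trans lxy); rewrite ltxx.
have -> : (#|C|).+1 = #|y |: C| by rewrite cardsU1 yC.
apply: leq_bigmax_cond; apply/and3P; split.
- apply/forall_inP => a /setU1P [->|aC]; apply/forall_inP => b /setU1P [->|bC'].
  + exact: comparablexx.
  + apply/orP; right; apply: le_trans (ltW lxy); exact: (forall_inP bC).
  + apply/orP; left; apply: le_trans (ltW lxy); exact: (forall_inP bC).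
  + exact: (forall_inP (forall_inP hC _ aC)).
- exact: setU11.
- apply/forall_inP => a /setU1P [->|aC] //.
  apply: le_trans (ltW lxy); exact: (forall_inP bC).
Qed.

End H.

Theorem lemma7 (gT : finGroupType) (d : Order.disp_t) (T : finPOrderType d)
  (to : {action gT &-> T}) :
  1 < #|[set: gT]| ->
  order_preserving to ->
  exists f : T -> 'I_(max_chain_size T), proper_colouring to f.
Proof.
move=> _ op.
exists (fun x => Ordinal (Ht_lt x)) => x y /andP [/existsP [g /andP [_ cmp]] nor].
apply/negP => /eqP [] E.
have Hy : Ht (to y g) = Ht y := Ht_act op y g.
have neq : Ht x != Ht (to y g).
  have: x != to y g.
    apply/eqP => exy; move/negP: nor; apply.
    have := mem_orbit to (to y g) (in_setT g^-1%g).
    by rewrite actK -exy.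
  move=> ne; case/orP: cmp => h.
  - by rewrite neq_ltn Ht_lt_mono // lt_neqAle h andbT.
  - by rewrite neq_ltn (@Ht_lt_mono _ _ (to y g)) ?orbT // lt_neqAle h andbT eq_sym.
move: E; rewrite Hy in neq.
move/(congr1 S); rewrite !prednK ?Ht_ge1 // => E.
by rewrite E eqxx in neq.
Qed.
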